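(* For every $g\in\mathscr T'$, the map $e^{a(g)}:\mathcal F_{\rm fin}(\mathscr T)\to\mathcal F_{\rm fin}(\mathscr T)$ is injective.
   Context: Let $\mathfrak h$ be a complex Hilbert space, $\mathscr T$ a topological vector space continuously embedded in $\mathfrak h$ with dense image, and $\mathscr T'$ the space of continuous antilinear functionals on $\mathscr T$; write $\langle\varphi,f\rangle:=\overline{\varphi(f)}$ for $\varphi\in\mathscr T'$, $f\in\mathscr T$. $\mathcal F(\mathfrak h)$ is the symmetric Fock space over $\mathfrak h$, and $\mathcal F_{\rm fin}(\mathscr T)$ the space of vectors with finitely many nonzero components, the $n$-th in the algebraic symmetric tensor product of $n$ copies of $\mathscr T$. For $g\in\mathscr T'$, $a(g):\mathcal F_{\rm fin}(\mathscr T)\to\mathcal F_{\rm fin}(\mathscr T)$ is defined linearly by $(a(g)\Psi)_n=\frac{\sqrt{n+1}}{(n+1)!}\sum_{\sigma\in S_{n+1}}\langle g,\psi_{\sigma(1)}\rangle\,\psi_{\sigma(2)}\otimes\cdots\otimes\psi_{\sigma(n+1)}$ for $\Psi_{n+1}=\psi_1\otimes_s\cdots\otimes_s\psi_{n+1}$, and $e^{a(g)}:=\sum_{k\ge0}a(g)^k/k!$, which is a finite sum on each vector of $\mathcal F_{\rm fin}(\mathscr T)$. *)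

(* Defs.v *)
From HB Require Import structures.
From mathcomp Require Import all_boot all_order all_algebra all_fingroup.
From mathcomp Require Import complex.
From mathcomp Require Import all_classical all_reals topology normedtype tvs.
Import Order.TTheory GRing.Theory Num.Theory.
Import numFieldTopology.Exports.

Set Implicit Arguments.
Unset Strict Implicit.
Unset Printing Implicit Defensive.

Local Open Scope ring_scope.

Section Defs.
Variable R : realType.
Local Notation C := R[i].

Section Hilbert.
Variable H : lmodType C.
Variable ip : H -> H -> C.

Definition hnorm (x : H) : R := Num.sqrt (complex.Re (ip x x)).

Definition is_inner_product : Prop :=
  [/\ (forall (a : C) (x y z : H), ip x (a *: y + z) = a * ip x y + ip x z),
      (forall x y : H, ip y x = (ip x y)^*),
      (forall x : H, 0 <= ip x x) &
      (forall x : H, ip x x = 0 -> x = 0)].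

Definition is_complete_ip : Prop :=
  forall u : nat -> H,
    (forall e : R, 0 < e -> exists N : nat, forall m n : nat,
        (N <= m)%N -> (N <= n)%N -> hnorm (u m - u n) < e) ->
    exists l : H, forall e : R, 0 < e -> exists N : nat, forall n : nat,
        (N <= n)%N -> hnorm (u n - l) < e.

Definition is_hilbert : Prop := is_inner_product /\ is_complete_ip.
End Hilbert.

Definition continuous_dense_embedding (T : topologicalLmodType C)
    (H : lmodType C) (ip : H -> H -> C) (iota : T -> H) : Prop :=
  [/\ (forall (a : C) (x y : T), iota (a *: x + y) = a *: iota x + iota y),
      injective iota,
      (forall (x : T) (e : R), 0 < e ->
          \forall y \near x, hnorm ip (iota y - iota x) < e) &
      (forall (v : H) (e : R), 0 < e -> exists f : T, hnorm ip (v - iota f) < e)].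

Definition in_antidual (T : topologicalLmodType C) (g : T -> C) : Prop :=
  (forall (a : C) (x y : T), g (a *: x + y) = a^* * g x + g y) /\
  continuous (fun x : T => (g x : C^o)).

Definition pairing (T : Type) (g : T -> C) (f : T) : C := (g f)^*.

(* Vectors of F_fin(T).  A vector is represented by a finite formal    *)
(* linear combination of symmetric products: the entry (c, [:: p_1;..; *)
(* p_n]) stands for  c * (p_1 (x)_s ... (x)_s p_n)  in the n-th        *)
(* component.  Every vector of F_fin(T) has such a representation      *)
(* (finitely many components, each in the algebraic symmetric tensor   *)
(* power, which is spanned by symmetric products).                     *)
Definition fock (T : Type) := seq (C * seq T).

Section Fock.
Variables (T : lmodType C) (H : lmodType C) (ip : H -> H -> C) (iota : T -> H).

(* Pairing of p_1 (x)_s ... (x)_s p_n (viewed in h^{(x) n}, with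
   p (x)_s ... := (1/n!) sum_sigma p_sigma(1) (x) ... ) against the product
   vector f_1 (x) ... (x) f_n of h^{(x) n}. *)
Definition sym_eval (s : seq T) (fs : seq H) : C :=
  ((size s)`!%:R)^-1 *
  \sum_(sigma : 'S_(size s))
     \prod_(i < size s) ip (nth 0 fs i) (iota (nth 0 s (sigma i))).

Definition fock_pair (Psi : fock T) (n : nat) (fs : seq H) : C :=
  \sum_(x <- Psi | size x.2 == n) x.1 * sym_eval x.2 fs.

(* Equality of the represented vectors of F_fin(T) (subset of F(h)):
   two vectors agree iff all their components agree, and an element of
   h^{(x) n} is determined by its pairings with product vectors. *)
Definition fock_eq (Psi Phi : fock T) : Prop :=
  forall (n : nat) (fs : seq H), size fs = n ->
    fock_pair Psi n fs = fock_pair Phi n fs.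
End Fock.

Section Annihilation.
Variables (T : lmodType C) (g : T -> C).

(* a(g) on a symmetric product of n+1 vectors:
   sqrt(n+1)/(n+1)! * sum_{sigma in S_{n+1}} <g, p_sigma(1)>
                       p_sigma(2) (x) ... (x) p_sigma(n+1);
   a(g) kills the 0-th component. *)
Definition ann_gen (x : C * seq T) : fock T :=
  match size x.2 with
  | 0 => [::]
  | m.+1 =>
    [seq (x.1 * (sqrtC (m.+1)%:R / (m.+1)`!%:R)
               * pairing g (nth 0 x.2 (sigma ord0)),
          [seq nth 0 x.2 (sigma (lift ord0 j)) | j <- enum 'I_m])
    | sigma : 'S_m.+1 <- enum [set: 'S_m.+1]]
  end.

Definition ann (Psi : fock T) : fock T := flatten (map ann_gen Psi).

Definition fock_scale (k : C) (Psi : fock T) : fock T :=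
  [seq (k * x.1, x.2) | x <- Psi].

Definition maxdeg (Psi : fock T) : nat := \max_(x <- Psi) size x.2.

(* e^{a(g)} = sum_{k >= 0} a(g)^k / k!; on the representation, a(g)^k Psi
   is the empty combination as soon as k > maxdeg Psi, so the sum below is
   the full (finite) series. *)
Definition exp_ann (Psi : fock T) : fock T :=
  flatten [seq fock_scale ((k`!%:R)^-1) (iter k ann Psi)
          | k <- iota 0 (maxdeg Psi).+1].
End Annihilation.

End Defs.

(* Main.v *)
Require Import Defs.
From HB Require Import structures.
From mathcomp Require Import all_boot all_order all_algebra all_fingroup.
From mathcomp Require Import complex.
From mathcomp Require Import all_classical all_reals topology normedtype tvs.
Import Order.TTheory GRing.Theory Num.Theory.
Import numFieldTopology.Exports.
From mathcomp Require Import zify.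
Local Open Scope ring_scope.

Section Aux.
Variables (R : realType) (H : lmodType R[i]) (ip : H -> H -> R[i])
    (T : topologicalLmodType R[i]) (iota : T -> H) (g : T -> R[i]).
Local Notation C := R[i].
Hypothesis ipl : forall (a : C) (x y z : H), ip x (a *: y + z) = a * ip x y + ip x z.
Hypothesis ipc : forall x y : H, ip y x = (ip x y)^*.
Hypothesis ipd : forall x : H, ip x x = 0 -> x = 0.
Hypothesis iotal : forall (a : C) (x y : T), iota (a *: x + y) = a *: iota x + iota y.
Hypothesis iotai : injective iota.
Hypothesis gl : forall (a : C) (x y : T), g (a *: x + y) = a^* * g x + g y.

Lemma lin0 {F : T -> C} : (forall a x y, F (a *: x + y) = a * F x + F y) -> F 0 = 0.
Proof.
move=> FL; have := FL 1 0 0; rewrite scale1r addr0 mul1r => /eqP.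
by rewrite -{1}[F 0]add0r (inj_eq (addIr _)) eq_sym => /eqP.
Qed.

Lemma ip0r x : ip x 0 = 0.
Proof.
have := ipl 1 x 0 0; rewrite scale1r addr0 mul1r => /eqP.
by rewrite -{1}[ip x 0]add0r (inj_eq (addIr _)) eq_sym => /eqP.
Qed.

Lemma ipl1 (a : C) x y z : ip (a *: x + y) z = a^* * ip x z + ip y z.
Proof. by rewrite ipc ipl rmorphD rmorphM /= -!ipc. Qed.

Lemma iota0 : iota 0 = 0.
Proof.
have := iotal 1 0 0; rewrite !scale1r !addr0 => /eqP.
by rewrite -{1}[iota 0]add0r (inj_eq (addIr _)) eq_sym => /eqP.
Qed.

Lemma iotaD x y : iota (x + y) = iota x + iota y.
Proof. by have := iotal 1 x y; rewrite !scale1r. Qed.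

Lemma iotaZ a x : iota (a *: x) = a *: iota x.
Proof. by have := iotal a x 0; rewrite addr0 iota0 addr0. Qed.

Lemma iotaB x y : iota (x - y) = iota x - iota y.
Proof. by rewrite iotaD -[- y]scaleN1r iotaZ scaleN1r. Qed.

Inductive inspan (L : seq T) : T -> Prop :=
| sp0 : inspan L 0
| spv v : v \in L -> inspan L v
| spl a x y : inspan L x -> inspan L y -> inspan L (a *: x + y).

Lemma agree_span L (F G : T -> C) :
  (forall a x y, F (a *: x + y) = a * F x + F y) ->
  (forall a x y, G (a *: x + y) = a * G x + G y) ->
  (forall v, v \in L -> F v = G v) -> forall t, inspan L t -> F t = G t.
Proof.
move=> FL GL FG t; elim => [|v /FG //|a x y _ ex _ ey].
  by rewrite (lin0 FL) (lin0 GL).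
by rewrite FL GL ex ey.
Qed.

Lemma inspan_cons v L t : inspan L t -> inspan (v :: L) t.
Proof.
elim => [|w wL|a x y _ ex _ ey]; first exact: sp0.
  by apply: spv; rewrite inE wL orbT.
exact: spl.
Qed.

Lemma riesz L (psi : T -> C) : (forall a x y, psi (a *: x + y) = a * psi x + psi y) ->
  exists t, inspan L t /\ forall v, v \in L -> ip (iota t) (iota v) = psi v.
Proof.
elim: L psi => [|v L IH] psi psiL.
  by exists 0; split; [exact: sp0|].
have [t0 [t0s t0P]] := IH psi psiL.
have [t1 [t1s t1P]] : exists t, inspan L t /\ forall w, w \in L -> ip (iota t) (iota w) = ip (iota v) (iota w).
  by apply: IH => a x y; rewrite iotal ipl.
have FL (u : H) : forall a x y, ip u (iota (a *: x + y)) = a * ip u (iota x) + ip u (iota y).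
  by move=> a x y; rewrite iotal ipl.
have [e|ne] := eqVneq v t1.
  exists t0; split; first exact: inspan_cons.
  move=> w; rewrite inE => /orP[/eqP ->|/t0P //].
  rewrite e; have := (agree_span L (fun x => ip (iota t0) (iota x)) psi (FL _) psiL t0P); apply; exact: t1s.
set u := iota (v - t1).
have orth w : w \in L -> ip u (iota w) = 0.
  by move=> wL; rewrite /u iotaB addrC -[- iota t1]scaleN1r ipl1 t1P // rmorphN1 mulN1r addNr.
have ut1 : ip u (iota t1) = 0.
  by apply: (agree_span L (fun x => ip u (iota x)) (fun _ => 0) (FL _)) => // *; rewrite mulr0 addr0.
have uv : ip u (iota v) = ip u u.
  by rewrite {3}/u iotaB addrC -[- iota t1]scaleN1r ipl mulN1r ut1 oppr0 add0r.
have r0 : ip u u != 0.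
  apply/eqP => /ipd; rewrite /u iotaB => /eqP; rewrite subr_eq0 => /eqP /iotai.
  by move/eqP; rewrite (negbTE ne).
set al := ((psi v - ip (iota t0) (iota v)) / ip u u)^*.
exists (al *: (v - t1) + t0); split.
  apply: spl; last exact: inspan_cons.
  have -> : v - t1 = 1 *: v + ((-1) *: t1 + 0) by rewrite scale1r scaleN1r addr0.
  apply: spl; first by apply: spv; rewrite inE eqxx.
  apply: spl; [exact: inspan_cons | exact: sp0].
move=> w; rewrite inE iotal ipl1 -/u /al conjCK => /orP[/eqP ->|wL].
  by rewrite uv mulfVK // subrK.
by rewrite orth // mulr0 add0r t0P.
Qed.

Lemma sym_evalE s n fs : size s = n -> sym_eval ip iota s fs =
  (n`!%:R)^-1 * \sum_(t : 'S_n) \prod_(i < n) ip (nth 0 fs i) (iota (nth 0 s (t i))).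
Proof. by move=> <-. Qed.

Lemma symE_map m (f : 'I_m -> T) fs :
  sym_eval ip iota [seq f j | j <- enum 'I_m] fs =
  (m`!%:R)^-1 * \sum_(t : 'S_m) \prod_(i < m) ip (nth 0 fs i) (iota (f (t i))).
Proof.
rewrite (sym_evalE _ m); first f_equal; last first.
  rewrite size_map; first [exact: size_enum_ord | by rewrite -enumT size_enum_ord | by rewrite size_enum_ord | idtac].
apply: eq_bigr => t _; apply: eq_bigr => i _.
by rewrite (nth_map (t i)) ?size_enum_ord // nth_ord_enum.
Qed.

Lemma perm_key m (p : 'I_m.+1 -> C) (q : 'I_m -> 'I_m.+1 -> C) :
 \sum_(s : 'S_m.+1) p (s ord0) * \sum_(t : 'S_m) \prod_(i < m) q i (s (lift ord0 (t i)))
 = m`!%:R * \sum_(r : 'S_m.+1) p (r ord0) * \prod_(i < m) q i (r (lift ord0 i)).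
Proof.
under eq_bigr do rewrite mulr_sumr.
rewrite exchange_big /=.
transitivity (\sum_(t : 'S_m) \sum_(r : 'S_m.+1) p (r ord0) * \prod_(i < m) q i (r (lift ord0 i))).
  apply: eq_bigr => t _.
  rewrite [RHS](reindex_inj (mulgI (lift_perm ord0 ord0 t))) /=.
  apply: eq_bigr => s _; rewrite permM lift_perm_id; congr (_ * _).
  by apply: eq_bigr => i _; rewrite permM lift_perm_lift.
by rewrite sumr_const card_Sn mulr_natl.
Qed.

Section Fock.
Variable h : H.
Definition goodv v := ip h (iota v) = pairing g v.
Definition good (X : fock R T) := forall x, x \in X -> forall v, v \in x.2 -> goodv v.

Lemma fp_cat A B n fs : fock_pair ip iota (A ++ B) n fs =
  fock_pair ip iota A n fs + fock_pair ip iota B n fs.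
Proof. by rewrite /fock_pair big_cat. Qed.

Lemma fp_flatten l n fs : fock_pair ip iota (flatten l) n fs =
  \sum_(X <- l) fock_pair ip iota X n fs.
Proof.
elim: l => [|X l IH]; first by rewrite big_nil /fock_pair big_nil.
by rewrite /= fp_cat IH big_cons.
Qed.

Lemma fp_scale k X n fs : fock_pair ip iota (fock_scale k X) n fs =
  k * fock_pair ip iota X n fs.
Proof.
rewrite /fock_pair /fock_scale big_map mulr_sumr; apply: eq_bigr => x _ /=.
by rewrite mulrA.
Qed.

Lemma fp_ann_gen c s m fs : (forall v, v \in s -> goodv v) ->
  fock_pair ip iota (ann_gen g (c, s)) m fs =
  if size s == m.+1 then sqrtC (m.+1)%:R * (c * sym_eval ip iota s (h :: fs)) else 0.
Proof.
move=> sg; rewrite /ann_gen /=.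
case E: (size s) => [|m'] /=; first by rewrite /fock_pair big_nil.
rewrite /fock_pair big_map.
have [em|nm] := eqVneq m' m; last first.
  rewrite eqSS (negbTE nm) big_pred0 // => t.
  by rewrite size_map size_enum_ord (negbTE nm).
subst m'; rewrite eqxx.
rewrite (eq_bigl xpredT); last by move=> t; rewrite size_map size_enum_ord eqxx.
rewrite big_enum /=.
rewrite (eq_bigl xpredT); last by move=> t; rewrite finset.in_setT.
under eq_bigr do rewrite symE_map.
rewrite (sym_evalE _ m.+1) //.
rewrite [in RHS](eq_bigr (fun r : 'S_m.+1 => pairing g (nth 0 s (r ord0)) *
   \prod_(i < m) ip (nth 0 fs i) (iota (nth 0 s (r (lift ord0 i)))))); last first.
  move=> r _; rewrite big_ord_recl /=; congr (_ * _).
  by apply: sg; rewrite mem_nth // E.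
have K := perm_key m (fun k => pairing g (nth 0 s k))
   (fun i k => ip (nth 0 fs i) (iota (nth 0 s k))).
simpl in K.
transitivity (c * (sqrtC (m.+1)%:R / (m.+1)`!%:R) * (m`!%:R)^-1 *
   \sum_(s0 : 'S_m.+1) pairing g (nth 0 s (s0 ord0)) *
     \sum_(t : 'S_m) \prod_(i < m) ip (nth 0 fs i) (iota (nth 0 s (s0 (lift ord0 (t i)))))).
  rewrite mulr_sumr; apply: eq_bigr => s0 _; rewrite /=.
  have L4 (A p F S : C) : A * p * (F * S) = A * F * (p * S) by rewrite -!mulrA (mulrCA p).
  exact: L4.
rewrite K.
have F0 : (m`!%:R : C) != 0 by rewrite pnatr_eq0 -lt0n fact_gt0.
rewrite [_ * (m`!%:R * _)]mulrA mulfVK // !mulrA; congr (_ * _).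
by rewrite (mulrC c).
Qed.


Lemma fp_ann X m fs : good X ->
  fock_pair ip iota (ann g X) m fs = sqrtC (m.+1)%:R * fock_pair ip iota X m.+1 (h :: fs).
Proof.
move=> gX.
transitivity (\sum_(x <- X) (if size x.2 == m.+1 then
   sqrtC (m.+1)%:R * (x.1 * sym_eval ip iota x.2 (h :: fs)) else 0)).
  rewrite /ann fp_flatten big_map big_seq [RHS]big_seq; apply: eq_bigr => -[c s] xX.
  by apply: fp_ann_gen => v vs; exact: (gX _ xX).
rewrite /fock_pair [in RHS]big_mkcond mulr_sumr; apply: eq_bigr => x _.
by case: ifP; rewrite ?mulr0.
Qed.

Lemma good_ann X : good X -> good (ann g X).
Proof.
move=> gX y /flattenP [Y /mapP [[c s] xX ->]]; rewrite /ann_gen /=.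
case E: (size s) => [|m] //= /mapP [t _ ->] v /= /mapP [j _ ->].
by apply: (gX _ xX); rewrite mem_nth // E.
Qed.

Definition kap m k : C := \prod_(i < k) sqrtC (m + i).+1%:R.

Lemma fp_iter k X m fs : good X ->
  fock_pair ip iota (iter k (ann g) X) m fs =
  kap m k * fock_pair ip iota X (m + k) (nseq k h ++ fs).
Proof.
elim: k X m fs => [|k IH] X m fs gX; first by rewrite /kap big_ord0 mul1r addn0.
have gA := good_ann X gX.
by rewrite iterSr (IH _ _ _ gA) (fp_ann X _ _ gX) /kap big_ord_recr /= addnS mulrA.
Qed.

Lemma fp_big X n fs : (maxdeg X < n)%N -> fock_pair ip iota X n fs = 0.
Proof.
move=> lt; rewrite /fock_pair big_seq_cond big1 // => x /andP [xX /eqP sz].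
have Hx : (size x.2 <= maxdeg X)%N by rewrite /maxdeg; apply: leq_bigmax_seq.
by move: lt; rewrite -sz ltnNge Hx.
Qed.

Lemma fp_exp X n fs M : good X -> (maxdeg X < M)%N ->
  fock_pair ip iota (exp_ann g X) n fs =
  \sum_(k < M) (k`!%:R)^-1 * fock_pair ip iota (iter k (ann g) X) n fs.
Proof.
move=> gX lt.
transitivity (\sum_(0 <= k < (maxdeg X).+1)
   (k`!%:R)^-1 * fock_pair ip iota (iter k (ann g) X) n fs).
  rewrite /exp_ann fp_flatten big_map /index_iota subn0; apply: eq_bigr => k _.
  exact: fp_scale.
have -> : \sum_(k < M) (k`!%:R)^-1 * fock_pair ip iota (iter k (ann g) X) n fs =
  \sum_(0 <= k < M) (k`!%:R)^-1 * fock_pair ip iota (iter k (ann g) X) n fs by rewrite big_mkord.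
rewrite [RHS](@big_cat_nat _ _ _ (maxdeg X).+1) //=.
rewrite [X in _ = _ + X]big1_seq ?addr0 // => k /andP [_].
rewrite mem_index_iota => /andP [lk _].
rewrite fp_iter // fp_big ?mulr0 //.
by apply: (leq_trans lk); rewrite leq_addl.
Qed.
End Fock.

Lemma main (Psi Phi : fock R T) :
  fock_eq ip iota (exp_ann g Psi) (exp_ann g Phi) -> fock_eq ip iota Psi Phi.
Proof.
move=> Heq.
set L := flatten [seq x.2 | x <- Psi ++ Phi].
have psiL : forall a x y, pairing g (a *: x + y) = a * pairing g x + pairing g y.
  by move=> a x y; rewrite /pairing gl rmorphD rmorphM /= conjCK.
have [t [_ tP]] := riesz L (pairing g) psiL.
set h := iota t.
have gP : good h Psi.
  move=> x xX v vx; apply: tP; apply/flattenP; exists x.2 => //.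
  by apply/mapP; exists x; rewrite // mem_cat xX.
have gF : good h Phi.
  move=> x xX v vx; apply: tP; apply/flattenP; exists x.2 => //.
  by apply/mapP; exists x; rewrite // mem_cat xX orbT.
set M := (maxdeg Psi + maxdeg Phi).+1.
have lP : (maxdeg Psi < M)%N by rewrite ltnS leq_addr.
have lF : (maxdeg Phi < M)%N by rewrite ltnS leq_addl.
suff claim : forall d n, (M - d <= n)%N -> forall fs, size fs = n ->
    fock_pair ip iota Psi n fs = fock_pair ip iota Phi n fs.
  by move=> n fs sz; apply: (claim M) => //; rewrite subnn.
elim => [|d IH] n.
  rewrite subn0 => le fs _.
  rewrite !fp_big //; [exact: leq_trans lF le | exact: leq_trans lP le].
move=> le fs sz.
case: (leqP (M - d) n) => [le'|lt']; first exact: IH.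
have := Heq n fs sz.
rewrite (fp_exp h Psi n fs M) // (fp_exp h Phi n fs M) //.
rewrite /M !big_ord_recl /=.
have -> : \sum_(i < maxdeg Psi + maxdeg Phi)
      ((bump 0 i)`!%:R)^-1 * fock_pair ip iota (iter (bump 0 i) (ann g) Psi) n fs =
    \sum_(i < maxdeg Psi + maxdeg Phi)
      ((bump 0 i)`!%:R)^-1 * fock_pair ip iota (iter (bump 0 i) (ann g) Phi) n fs.
  apply: eq_bigr => i _; rewrite (fp_iter h _ _ _ _ gP) (fp_iter h _ _ _ _ gF); congr (_ * (_ * _)).
  apply: IH; last by rewrite size_cat size_nseq sz addnC.
  rewrite /bump /=; move: le; rewrite /M; lia.
by move/addIr; rewrite fact0 invr1 !mul1r.
Qed.
End Aux.

Theorem proposition2p9 (R : realType) (H : lmodType R[i]) (ip : H -> H -> R[i])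
    (T : topologicalLmodType R[i]) (iota : T -> H) (g : T -> R[i]) :
  is_hilbert ip ->
  continuous_dense_embedding ip iota ->
  in_antidual g ->
  forall Psi Phi : fock R T,
    fock_eq ip iota (exp_ann g Psi) (exp_ann g Phi) ->
    fock_eq ip iota Psi Phi.
Proof.
move=> [[ipl ipc _ ipd] _] [iotal iotai _ _] [gl _].
exact: (@main R H ip T iota g ipl ipc ipd iotal iotai gl).
Qed.
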